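(* Consider $\mathbb{R}^4$ with coordinates $(u_1,u_2,p_{u_1},p_{u_2})$ and the Poisson bracket $$\{u_1,u_2\}=0,\quad \{p_{u_1},p_{u_2}\}=0,\quad \{u_i,p_{u_j}\}=\delta_{ij}\,u_i .$$ On the open set where $u_1u_2\neq0$, $u_1\neq u_2$ and $p_{u_1}u_2\neq p_{u_2}u_1$, define $$a=\frac{p_{u_1}^2}{u_1-u_2}+\frac{p_{u_2}^2}{u_2-u_1}-u_1^2-u_1u_2-u_2^2,\qquad b=\frac{u_2p_{u_1}^2}{u_2-u_1}+\frac{u_1p_{u_2}^2}{u_1-u_2}+(u_1+u_2)u_1u_2,$$ $$b_1=\frac{p_{u_1}u_2-p_{u_2}u_1}{u_1u_2(u_1-u_2)},\qquad b_0=-\frac{p_{u_1}u_2^2-p_{u_2}u_1^2}{u_1u_2(u_1-u_2)},$$ so that the parabola $y=x(b_1x+b_0)$ passes through $(u_1,p_{u_1})$ and $(u_2,p_{u_2})$. Then the quartic polynomial $x^3+ax+b-x^2(b_1x+b_0)^2$ is divisible by $(x-u_1)(x-u_2)$; let $v_1,v_2$ be the roots of the quadratic quotient. On an open subset $W$ where $v_1,v_2$ are real and distinct and can be chosen as smooth functions, define $$p_{v_j}=-v_j\,(b_1v_j+b_0),\qquad j=1,2,$$ and the map $\rho:(u_1,u_2,p_{u_1},p_{u_2})\mapsto(v_1,v_2,p_{v_1},p_{v_2})$. Then: (i) $\rho$ preserves the functions $a$ and $b$, i.e. $a\circ\rho=a$ and $b\circ\rho=b$ on $W$; (ii) $\rho$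 preserves the Poisson bracket above: $\{v_1,v_2\}=0$, $\{p_{v_1},p_{v_2}\}=0$, $\{v_i,p_{v_j}\}=\delta_{ij}\,v_i$.
   Context: For the bracket $\{u_i,p_{u_j}\}=\delta_{ij}u_i$ one has $\{f,g\}=\sum_{i=1}^2 u_i\left(\frac{\partial f}{\partial u_i}\frac{\partial g}{\partial p_{u_i}}-\frac{\partial f}{\partial p_{u_i}}\frac{\partial g}{\partial u_i}\right)$. The functions $a,b$ are in involution with respect to this bracket; they are the unique functions with $p_{u_i}^2=u_i^3+au_i+b$, $i=1,2$. *)

(* Defs.v *)
From Stdlib Require Import Reals.
Open Scope R_scope.

(* Functions on R^4 with coordinates (u1, u2, p1, p2) = (u_1, u_2, p_{u_1}, p_{u_2}). *)
Definition F4 := R -> R -> R -> R -> R.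
Definition Set4 := R -> R -> R -> R -> Prop.

Definition D1 (f : F4) x1 x2 x3 x4 l := derivable_pt_lim (fun t => f t x2 x3 x4) x1 l.
Definition D2 (f : F4) x1 x2 x3 x4 l := derivable_pt_lim (fun t => f x1 t x3 x4) x2 l.
Definition D3 (f : F4) x1 x2 x3 x4 l := derivable_pt_lim (fun t => f x1 x2 t x4) x3 l.
Definition D4 (f : F4) x1 x2 x3 x4 l := derivable_pt_lim (fun t => f x1 x2 x3 t) x4 l.

Definition has_partials (f : F4) x1 x2 x3 x4 : Prop :=
  (exists l, D1 f x1 x2 x3 x4 l) /\ (exists l, D2 f x1 x2 x3 x4 l) /\
  (exists l, D3 f x1 x2 x3 x4 l) /\ (exists l, D4 f x1 x2 x3 x4 l).

(* The bracket {f,g} = sum_i u_i (df/du_i dg/dp_i - df/dp_i dg/du_i), i.e. the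
   bracket with {u_i,p_{u_j}} = delta_ij u_i, {u_1,u_2} = {p_1,p_2} = 0,
   has value [val] at the point (x1,x2,x3,x4). *)
Definition bracket_value (f g : F4) x1 x2 x3 x4 (val : R) : Prop :=
  forall f1 f2 f3 f4 g1 g2 g3 g4,
    D1 f x1 x2 x3 x4 f1 -> D2 f x1 x2 x3 x4 f2 ->
    D3 f x1 x2 x3 x4 f3 -> D4 f x1 x2 x3 x4 f4 ->
    D1 g x1 x2 x3 x4 g1 -> D2 g x1 x2 x3 x4 g2 ->
    D3 g x1 x2 x3 x4 g3 -> D4 g x1 x2 x3 x4 g4 ->
    val = x1 * (f1 * g3 - f3 * g1) + x2 * (f2 * g4 - f4 * g2).

Definition PB_eq (f g h : F4) (W : Set4) : Prop :=
  forall x1 x2 x3 x4, W x1 x2 x3 x4 ->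
    has_partials f x1 x2 x3 x4 /\ has_partials g x1 x2 x3 x4 /\
    bracket_value f g x1 x2 x3 x4 (h x1 x2 x3 x4).

Definition cu1 : F4 := fun u1 u2 p1 p2 => u1.
Definition cu2 : F4 := fun u1 u2 p1 p2 => u2.
Definition czero : F4 := fun _ _ _ _ => 0.

Definition open4 (W : Set4) : Prop :=
  forall x1 x2 x3 x4, W x1 x2 x3 x4 ->
    exists eps, 0 < eps /\ forall y1 y2 y3 y4,
      Rabs (y1 - x1) < eps -> Rabs (y2 - x2) < eps ->
      Rabs (y3 - x3) < eps -> Rabs (y4 - x4) < eps -> W y1 y2 y3 y4.

Definition continuous_on4 (f : F4) (W : Set4) : Prop :=
  forall x1 x2 x3 x4, W x1 x2 x3 x4 ->
    forall eps, 0 < eps -> exists delta, 0 < delta /\ forall y1 y2 y3 y4,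
      Rabs (y1 - x1) < delta -> Rabs (y2 - x2) < delta ->
      Rabs (y3 - x3) < delta -> Rabs (y4 - x4) < delta ->
      Rabs (f y1 y2 y3 y4 - f x1 x2 x3 x4) < eps.

Definition dom (u1 u2 p1 p2 : R) : Prop :=
  u1 * u2 <> 0 /\ u1 <> u2 /\ p1 * u2 <> p2 * u1.

Definition fa : F4 := fun u1 u2 p1 p2 =>
  p1 ^ 2 / (u1 - u2) + p2 ^ 2 / (u2 - u1) - u1 ^ 2 - u1 * u2 - u2 ^ 2.
Definition fb : F4 := fun u1 u2 p1 p2 =>
  u2 * p1 ^ 2 / (u2 - u1) + u1 * p2 ^ 2 / (u1 - u2) + (u1 + u2) * u1 * u2.
Definition fb1 : F4 := fun u1 u2 p1 p2 =>
  (p1 * u2 - p2 * u1) / (u1 * u2 * (u1 - u2)).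
Definition fb0 : F4 := fun u1 u2 p1 p2 =>
  - ((p1 * u2 ^ 2 - p2 * u1 ^ 2) / (u1 * u2 * (u1 - u2))).

Definition quartic (u1 u2 p1 p2 x : R) : R :=
  x ^ 3 + fa u1 u2 p1 p2 * x + fb u1 u2 p1 p2
  - x ^ 2 * (fb1 u1 u2 p1 p2 * x + fb0 u1 u2 p1 p2) ^ 2.

(* Main.v *)
Require Import Defs.
From Stdlib Require Import Reals Lra Field.
From Coquelicot Require Import Coquelicot.
Import Defs.
Open Scope R_scope.

Definition gB1 u1 u2 p1 p2 := - p1*(2*u1-u2)/(u1^2*(u1-u2)^2) + p2/(u2*(u1-u2)^2).
Definition gB2 u1 u2 p1 p2 := - p2*(2*u2-u1)/(u2^2*(u1-u2)^2) + p1/(u1*(u1-u2)^2).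
Definition gB3 u1 u2 (p1 p2 : R) := 1/(u1*(u1-u2)).
Definition gB4 u1 u2 (p1 p2 : R) := -1/(u2*(u1-u2)).
Definition gC1 u1 u2 p1 p2 := p1*u2*(2*u1-u2)/(u1^2*(u1-u2)^2) - p2/(u1-u2)^2.
Definition gC2 u1 u2 p1 p2 := p2*u1*(2*u2-u1)/(u2^2*(u1-u2)^2) - p1/(u1-u2)^2.
Definition gC3 u1 u2 (p1 p2 : R) := -u2/(u1*(u1-u2)).
Definition gC4 u1 u2 (p1 p2 : R) := u1/(u2*(u1-u2)).

Definition Sgr b1 b0 B C du1 du2 := -2*B/b1^3 - 2*C/b1 + 2*b0*B/b1^2 - du1 - du2.
Definition Pgr u1 u2 b1 b0 B C du1 du2 :=
  (2*u1+u2)*du1 + (u1+2*u2)*du2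
  + 2*(C*(u1+u2)/b1 + b0*(du1+du2)/b1 - b0*(u1+u2)*B/b1^2)
  + 2*b0*C/b1^2 - 2*b0^2*B/b1^3 - (du1+du2)/b1^2 + 2*(u1+u2)*B/b1^3.

Definition Sf : F4 := fun u1 u2 p1 p2 =>
  1/(fb1 u1 u2 p1 p2)^2 - 2*fb0 u1 u2 p1 p2/fb1 u1 u2 p1 p2 - u1 - u2.
Definition Pf : F4 := fun u1 u2 p1 p2 =>
  (u1^2+u1*u2+u2^2) + 2*fb0 u1 u2 p1 p2*(u1+u2)/fb1 u1 u2 p1 p2
  + (fb0 u1 u2 p1 p2)^2/(fb1 u1 u2 p1 p2)^2 - (u1+u2)/(fb1 u1 u2 p1 p2)^2.

Ltac nz := repeat first [apply Rmult_integral_contrapositive_currified | apply Rinv_neq_0_compat | apply pow_nonzero]; try lra; auto.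

Lemma dom_facts u1 u2 p1 p2 : dom u1 u2 p1 p2 ->
  u1 <> 0 /\ u2 <> 0 /\ u1 - u2 <> 0 /\ p1*u2 - p2*u1 <> 0.
Proof.
  intros [H1 [H2 H3]]. repeat split; try lra.
  - intro; apply H1; subst; ring.
  - intro; apply H1; subst; ring.
Qed.

Ltac dtac := let H := fresh in intros H; apply dom_facts in H;
  destruct H as [? [? [? ?]]];
  unfold D1, D2, D3, D4, Sf, Pf, fb1, fb0, gB1, gB2, gB3, gB4, gC1, gC2, gC3, gC4, Sgr, Pgr;
  apply is_derive_Reals; auto_derive; [ repeat split; nz | field; repeat split; nz ].

Section X.
Variables u1 u2 p1 p2 : R.
Lemma D1_b1 : dom u1 u2 p1 p2 -> D1 fb1 u1 u2 p1 p2 (gB1 u1 u2 p1 p2). Proof. dtac. Qed.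
Lemma D2_b1 : dom u1 u2 p1 p2 -> D2 fb1 u1 u2 p1 p2 (gB2 u1 u2 p1 p2). Proof. dtac. Qed.
Lemma D3_b1 : dom u1 u2 p1 p2 -> D3 fb1 u1 u2 p1 p2 (gB3 u1 u2 p1 p2). Proof. dtac. Qed.
Lemma D4_b1 : dom u1 u2 p1 p2 -> D4 fb1 u1 u2 p1 p2 (gB4 u1 u2 p1 p2). Proof. dtac. Qed.
Lemma D1_b0 : dom u1 u2 p1 p2 -> D1 fb0 u1 u2 p1 p2 (gC1 u1 u2 p1 p2). Proof. dtac. Qed.
Lemma D2_b0 : dom u1 u2 p1 p2 -> D2 fb0 u1 u2 p1 p2 (gC2 u1 u2 p1 p2). Proof. dtac. Qed.
Lemma D3_b0 : dom u1 u2 p1 p2 -> D3 fb0 u1 u2 p1 p2 (gC3 u1 u2 p1 p2). Proof. dtac. Qed.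
Lemma D4_b0 : dom u1 u2 p1 p2 -> D4 fb0 u1 u2 p1 p2 (gC4 u1 u2 p1 p2). Proof. dtac. Qed.
Lemma D1_S : dom u1 u2 p1 p2 -> D1 Sf u1 u2 p1 p2 (Sgr (fb1 u1 u2 p1 p2) (fb0 u1 u2 p1 p2) (gB1 u1 u2 p1 p2) (gC1 u1 u2 p1 p2) 1 0).
Proof. intros H; apply dom_facts in H;  destruct H as [? [? [? ?]]]; unfold D1, D2, D3, D4, Sf, Pf, fb1, fb0, gB1, gB2, gB3, gB4, gC1, gC2, gC3, gC4, Sgr, Pgr; apply is_derive_Reals; auto_derive; [ repeat split; nz | field; repeat split; nz ]. Qed.
Lemma D1_P : dom u1 u2 p1 p2 -> D1 Pf u1 u2 p1 p2 (Pgr u1 u2 (fb1 u1 u2 p1 p2) (fb0 u1 u2 p1 p2) (gB1 u1 u2 p1 p2) (gC1 u1 u2 p1 p2) 1 0).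
Proof. intros H; apply dom_facts in H;  destruct H as [? [? [? ?]]]; unfold D1, D2, D3, D4, Sf, Pf, fb1, fb0, gB1, gB2, gB3, gB4, gC1, gC2, gC3, gC4, Sgr, Pgr; apply is_derive_Reals; auto_derive; [ repeat split; nz | field; repeat split; nz ]. Qed.
Lemma D2_S : dom u1 u2 p1 p2 -> D2 Sf u1 u2 p1 p2 (Sgr (fb1 u1 u2 p1 p2) (fb0 u1 u2 p1 p2) (gB2 u1 u2 p1 p2) (gC2 u1 u2 p1 p2) 0 1).
Proof. intros H; apply dom_facts in H;  destruct H as [? [? [? ?]]]; unfold D1, D2, D3, D4, Sf, Pf, fb1, fb0, gB1, gB2, gB3, gB4, gC1, gC2, gC3, gC4, Sgr, Pgr; apply is_derive_Reals; auto_derive; [ repeat split; nz | field; repeat split; nz ]. Qed.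
Lemma D2_P : dom u1 u2 p1 p2 -> D2 Pf u1 u2 p1 p2 (Pgr u1 u2 (fb1 u1 u2 p1 p2) (fb0 u1 u2 p1 p2) (gB2 u1 u2 p1 p2) (gC2 u1 u2 p1 p2) 0 1).
Proof. intros H; apply dom_facts in H;  destruct H as [? [? [? ?]]]; unfold D1, D2, D3, D4, Sf, Pf, fb1, fb0, gB1, gB2, gB3, gB4, gC1, gC2, gC3, gC4, Sgr, Pgr; apply is_derive_Reals; auto_derive; [ repeat split; nz | field; repeat split; nz ]. Qed.
Lemma D3_S : dom u1 u2 p1 p2 -> D3 Sf u1 u2 p1 p2 (Sgr (fb1 u1 u2 p1 p2) (fb0 u1 u2 p1 p2) (gB3 u1 u2 p1 p2) (gC3 u1 u2 p1 p2) 0 0).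
Proof. intros H; apply dom_facts in H;  destruct H as [? [? [? ?]]]; unfold D1, D2, D3, D4, Sf, Pf, fb1, fb0, gB1, gB2, gB3, gB4, gC1, gC2, gC3, gC4, Sgr, Pgr; apply is_derive_Reals; auto_derive; [ repeat split; nz | field; repeat split; nz ]. Qed.
Lemma D3_P : dom u1 u2 p1 p2 -> D3 Pf u1 u2 p1 p2 (Pgr u1 u2 (fb1 u1 u2 p1 p2) (fb0 u1 u2 p1 p2) (gB3 u1 u2 p1 p2) (gC3 u1 u2 p1 p2) 0 0).
Proof. intros H; apply dom_facts in H;  destruct H as [? [? [? ?]]]; unfold D1, D2, D3, D4, Sf, Pf, fb1, fb0, gB1, gB2, gB3, gB4, gC1, gC2, gC3, gC4, Sgr, Pgr; apply is_derive_Reals; auto_derive; [ repeat split; nz | field; repeat split; nz ]. Qed.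
Lemma D4_S : dom u1 u2 p1 p2 -> D4 Sf u1 u2 p1 p2 (Sgr (fb1 u1 u2 p1 p2) (fb0 u1 u2 p1 p2) (gB4 u1 u2 p1 p2) (gC4 u1 u2 p1 p2) 0 0).
Proof. intros H; apply dom_facts in H;  destruct H as [? [? [? ?]]]; unfold D1, D2, D3, D4, Sf, Pf, fb1, fb0, gB1, gB2, gB3, gB4, gC1, gC2, gC3, gC4, Sgr, Pgr; apply is_derive_Reals; auto_derive; [ repeat split; nz | field; repeat split; nz ]. Qed.
Lemma D4_P : dom u1 u2 p1 p2 -> D4 Pf u1 u2 p1 p2 (Pgr u1 u2 (fb1 u1 u2 p1 p2) (fb0 u1 u2 p1 p2) (gB4 u1 u2 p1 p2) (gC4 u1 u2 p1 p2) 0 0).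
Proof. intros H; apply dom_facts in H;  destruct H as [? [? [? ?]]]; unfold D1, D2, D3, D4, Sf, Pf, fb1, fb0, gB1, gB2, gB3, gB4, gC1, gC2, gC3, gC4, Sgr, Pgr; apply is_derive_Reals; auto_derive; [ repeat split; nz | field; repeat split; nz ]. Qed.
End X.

Definition br (x1 x2 f1 f2 f3 f4 g1 g2 g3 g4 : R) :=
  x1*(f1*g3 - f3*g1) + x2*(f2*g4 - f4*g2).

Section Y.
Variables u1 u2 p1 p2 : R.
Let b1 := fb1 u1 u2 p1 p2.
Let b0 := fb0 u1 u2 p1 p2.
Let B1 := gB1 u1 u2 p1 p2. Let B2 := gB2 u1 u2 p1 p2. Let B3 := gB3 u1 u2 p1 p2. Let B4 := gB4 u1 u2 p1 p2.
Let C1 := gC1 u1 u2 p1 p2. Let C2 := gC2 u1 u2 p1 p2. Let C3 := gC3 u1 u2 p1 p2. Let C4 := gC4 u1 u2 p1 p2.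
Let s1 := Sgr b1 b0 B1 C1 1 0. Let s2 := Sgr b1 b0 B2 C2 0 1.
Let s3 := Sgr b1 b0 B3 C3 0 0. Let s4 := Sgr b1 b0 B4 C4 0 0.
Let q1 := Pgr u1 u2 b1 b0 B1 C1 1 0. Let q2 := Pgr u1 u2 b1 b0 B2 C2 0 1.
Let q3 := Pgr u1 u2 b1 b0 B3 C3 0 0. Let q4 := Pgr u1 u2 b1 b0 B4 C4 0 0.

Ltac ftac := let H := fresh in intros H; apply dom_facts in H;
  destruct H as [? [? [? ?]]];
  unfold br, s1, s2, s3, s4, q1, q2, q3, q4, Sgr, Pgr, B1, B2, B3, B4, C1, C2, C3, C4,
   b1, b0, Sf, fb1, fb0, gB1, gB2, gB3, gB4, gC1, gC2, gC3, gC4; field; repeat split; nz.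

Lemma br_BC : dom u1 u2 p1 p2 -> br u1 u2 B1 B2 B3 B4 C1 C2 C3 C4 = 0. Proof. ftac. Qed.
Lemma br_sB : dom u1 u2 p1 p2 -> br u1 u2 s1 s2 s3 s4 B1 B2 B3 B4 = 0. Proof. ftac. Qed.
Lemma br_qB : dom u1 u2 p1 p2 -> br u1 u2 q1 q2 q3 q4 B1 B2 B3 B4 = 1. Proof. ftac. Qed.
Lemma br_sC : dom u1 u2 p1 p2 -> br u1 u2 s1 s2 s3 s4 C1 C2 C3 C4 = -1. Proof. ftac. Qed.
Lemma br_qC : dom u1 u2 p1 p2 -> br u1 u2 q1 q2 q3 q4 C1 C2 C3 C4 = - Sf u1 u2 p1 p2. Proof. ftac. Qed.
Lemma br_sq : dom u1 u2 p1 p2 -> br u1 u2 s1 s2 s3 s4 q1 q2 q3 q4 = 0. Proof. ftac. Qed.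
End Y.

Lemma b1_nz u1 u2 p1 p2 : dom u1 u2 p1 p2 -> fb1 u1 u2 p1 p2 <> 0.
Proof. intros H; apply dom_facts in H; destruct H as [? [? [? ?]]]; unfold fb1.
  unfold Rdiv; nz. Qed.

Lemma cubic_coefs c3 c2 c1 c0 : (forall x, c3*x^3 + c2*x^2 + c1*x + c0 = 0) -> c3 = 0 /\ c0 = 0.
Proof.
  intros H. pose proof (H 0) as H0. pose proof (H 1) as H1. pose proof (H (-1)) as H2.
  pose proof (H 2) as H3. simpl in H0, H1, H2, H3. split; lra.
Qed.

Lemma Pf_eq u1 u2 p1 p2 : dom u1 u2 p1 p2 ->
  Pf u1 u2 p1 p2 = - fb u1 u2 p1 p2 / ((fb1 u1 u2 p1 p2)^2 * u1 * u2).
Proof. intros H; apply dom_facts in H; destruct H as [? [? [? ?]]].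
  unfold Pf, fb, fb1, fb0. field; repeat split; nz. Qed.

Lemma vieta u1 u2 p1 p2 v1 v2 : dom u1 u2 p1 p2 ->
  (forall x, quartic u1 u2 p1 p2 x =
          (x - u1) * (x - u2) * (- (fb1 u1 u2 p1 p2) ^ 2 * (x - v1) * (x - v2))) ->
  v1 + v2 = Sf u1 u2 p1 p2 /\ v1 * v2 = Pf u1 u2 p1 p2.
Proof.
  intros Hd H. pose proof (b1_nz _ _ _ _ Hd) as Hb. pose proof (dom_facts _ _ _ _ Hd) as [? [? [? ?]]].
  rewrite (Pf_eq _ _ _ _ Hd). unfold Sf.
  set (a := fa u1 u2 p1 p2) in *. set (b := fb u1 u2 p1 p2) in *.
  set (c := fb1 u1 u2 p1 p2) in *. set (d := fb0 u1 u2 p1 p2) in *.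
  assert (Hp : forall x,
    (1 - 2*c*d - c^2*(u1+u2+(v1+v2)))*x^3
    + (-d^2 + c^2*(u1*u2 + v1*v2 + (u1+u2)*(v1+v2)))*x^2
    + (a - c^2*((u1+u2)*(v1*v2) + u1*u2*(v1+v2)))*x
    + (b + c^2*(u1*u2)*(v1*v2)) = 0).
  { intro x. specialize (H x). unfold quartic in H. fold a b c d in H.
    apply Rminus_diag_eq in H. rewrite <- H. ring. }
  apply cubic_coefs in Hp. destruct Hp as [E3 E0]. split.
  - apply (Rmult_eq_reg_l (c^2)); [| apply pow_nonzero; auto].
    field_simplify; [| auto]. lra.
  - apply (Rmult_eq_reg_l (c^2 * u1 * u2)); [| nz].
    field_simplify; [| repeat split; auto]. lra.
Qed.

Lemma divis u1 u2 p1 p2 : dom u1 u2 p1 p2 ->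
     exists c2 c1 c0, forall x,
       quartic u1 u2 p1 p2 x = (x - u1) * (x - u2) * (c2 * x ^ 2 + c1 * x + c0).
Proof.
  intros Hd. pose proof (dom_facts _ _ _ _ Hd) as [? [? [? ?]]].
  exists (- (fb1 u1 u2 p1 p2)^2), (1 - 2*fb1 u1 u2 p1 p2*fb0 u1 u2 p1 p2 - (fb1 u1 u2 p1 p2)^2*(u1+u2)),
    (fb u1 u2 p1 p2/(u1*u2)).
  intro x. unfold quartic, fa, fb, fb1, fb0. field. repeat split; nz.
Qed.

Lemma preserve a b v1 v2 y1 y2 : v1 <> v2 -> y1^2 = v1^3 + a*v1 + b -> y2^2 = v2^3 + a*v2 + b ->
  fa v1 v2 y1 y2 = a /\ fb v1 v2 y1 y2 = b.
Proof.
  intros Hv H1 H2. unfold fa, fb. rewrite H1, H2. split; field; lra.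
Qed.

Definition lc (al1 al2 al3 al4 s q B C : R) := al1*s + al2*q + al3*B + al4*C.

Lemma br_comb x1 x2 a1 a2 a3 a4 c1 c2 c3 c4 s1 s2 s3 s4 q1 q2 q3 q4 B1 B2 B3 B4 C1 C2 C3 C4 :
  br x1 x2 (lc a1 a2 a3 a4 s1 q1 B1 C1) (lc a1 a2 a3 a4 s2 q2 B2 C2)
           (lc a1 a2 a3 a4 s3 q3 B3 C3) (lc a1 a2 a3 a4 s4 q4 B4 C4)
           (lc c1 c2 c3 c4 s1 q1 B1 C1) (lc c1 c2 c3 c4 s2 q2 B2 C2)
           (lc c1 c2 c3 c4 s3 q3 B3 C3) (lc c1 c2 c3 c4 s4 q4 B4 C4)
  = (a1*c2 - a2*c1) * br x1 x2 s1 s2 s3 s4 q1 q2 q3 q4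
  + (a1*c3 - a3*c1) * br x1 x2 s1 s2 s3 s4 B1 B2 B3 B4
  + (a1*c4 - a4*c1) * br x1 x2 s1 s2 s3 s4 C1 C2 C3 C4
  + (a2*c3 - a3*c2) * br x1 x2 q1 q2 q3 q4 B1 B2 B3 B4
  + (a2*c4 - a4*c2) * br x1 x2 q1 q2 q3 q4 C1 C2 C3 C4
  + (a3*c4 - a4*c3) * br x1 x2 B1 B2 B3 B4 C1 C2 C3 C4.
Proof. unfold br, lc. ring. Qed.

Lemma loc_deriv (f g : R -> R) x eps l : 0 < eps ->
  (forall t, Rabs (t - x) < eps -> f t = g t) -> derivable_pt_lim f x l -> derivable_pt_lim g x l.
Proof.
  intros He Heq Hf e He'. destruct (Hf e He') as [d Hd].
  assert (Hm : 0 < Rmin d eps) by (apply Rmin_pos; [apply cond_pos | auto]).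
  exists (mkposreal _ Hm). intros h Hh Hlt. simpl in Hlt.
  rewrite <- (Heq (x+h)), <- (Heq x).
  - apply Hd; auto. eapply Rlt_le_trans; [apply Hlt | apply Rmin_l].
  - rewrite Rminus_diag_eq, Rabs_R0; auto.
  - replace (x + h - x) with h by ring. eapply Rlt_le_trans; [apply Hlt | apply Rmin_r].
Qed.

Lemma pv_gen (V B C : R -> R) x a bb cc :
  derivable_pt_lim V x a -> derivable_pt_lim B x bb -> derivable_pt_lim C x cc ->
  derivable_pt_lim (fun t => - V t * (B t * V t + C t)) x
    (- a * (B x * V x + C x) + - V x * (bb * V x + B x * a + cc)).
Proof.
  intros HV HB HC.
  apply (derivable_pt_lim_mult (fun t => - V t) (fun t => B t * V t + C t)).
  - apply (derivable_pt_lim_opp V). auto.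
  - apply (derivable_pt_lim_plus (fun t => B t * V t) C); auto.
    apply (derivable_pt_lim_mult B V); auto.
Qed.

Lemma dpl_eq f x l l' : l = l' -> derivable_pt_lim f x l -> derivable_pt_lim f x l'.
Proof. intros ->; auto. Qed.

Lemma grad_gen (V1 V2 Sl Pl Bl Cl : R -> R) x eps a b ls lp lB lC :
  0 < eps -> (forall t, Rabs (t - x) < eps -> V1 t + V2 t = Sl t /\ V1 t * V2 t = Pl t) ->
  V1 x <> V2 x ->
  derivable_pt_lim V1 x a -> derivable_pt_lim V2 x b -> derivable_pt_lim Sl x ls ->
  derivable_pt_lim Pl x lp -> derivable_pt_lim Bl x lB -> derivable_pt_lim Cl x lC ->
  a = lc (V1 x/(V1 x - V2 x)) (-1/(V1 x - V2 x)) 0 0 ls lp lB lC /\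
  b = lc (-V2 x/(V1 x - V2 x)) (1/(V1 x - V2 x)) 0 0 ls lp lB lC /\
  derivable_pt_lim (fun t => - V1 t * (Bl t * V1 t + Cl t)) x
    (lc (-(2*Bl x*V1 x + Cl x)*V1 x/(V1 x - V2 x)) ((2*Bl x*V1 x + Cl x)/(V1 x - V2 x))
        (- V1 x ^ 2) (- V1 x) ls lp lB lC) /\
  derivable_pt_lim (fun t => - V2 t * (Bl t * V2 t + Cl t)) x
    (lc ((2*Bl x*V2 x + Cl x)*V2 x/(V1 x - V2 x)) (-(2*Bl x*V2 x + Cl x)/(V1 x - V2 x))
        (- V2 x ^ 2) (- V2 x) ls lp lB lC).
Proof.
  intros He Hn Hne H1 H2 HS HP HB HC.
  assert (Hd : V1 x - V2 x <> 0) by lra.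
  assert (Es : a + b = ls).
  { apply (uniqueness_limite Sl x); auto.
    apply (loc_deriv (fun t => V1 t + V2 t) Sl x eps); auto.
    - intros t Ht; apply Hn; auto.
    - apply (derivable_pt_lim_plus V1 V2); auto. }
  assert (Ep : a * V2 x + V1 x * b = lp).
  { apply (uniqueness_limite Pl x); auto.
    apply (loc_deriv (fun t => V1 t * V2 t) Pl x eps); auto.
    - intros t Ht; apply Hn; auto.
    - apply (derivable_pt_lim_mult V1 V2); auto. }
  assert (Ea : a = (V1 x * ls - lp) / (V1 x - V2 x)).
  { apply (Rmult_eq_reg_r (V1 x - V2 x)); auto. field_simplify; auto.
    rewrite <- Es, <- Ep. ring. }
  assert (Eb : b = ls - a) by lra.
  split; [| split; [| split]].
  - rewrite Ea. unfold lc. field. auto.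
  - rewrite Eb, Ea. unfold lc. field. auto.
  - eapply dpl_eq; [| apply pv_gen; eauto]. rewrite Ea. unfold lc. field. auto.
  - eapply dpl_eq; [| apply pv_gen; eauto]. rewrite Eb, Ea. unfold lc. field. auto.
Qed.

Definition HypW (W : Set4) (v1 v2 : F4) :=
  open4 W /\ (forall u1 u2 p1 p2, W u1 u2 p1 p2 -> dom u1 u2 p1 p2) /\
  (forall u1 u2 p1 p2, W u1 u2 p1 p2 -> v1 u1 u2 p1 p2 <> v2 u1 u2 p1 p2 /\
     v1 u1 u2 p1 p2 + v2 u1 u2 p1 p2 = Sf u1 u2 p1 p2 /\
     v1 u1 u2 p1 p2 * v2 u1 u2 p1 p2 = Pf u1 u2 p1 p2).

Definition pvf (v : F4) : F4 := fun u1 u2 p1 p2 =>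
  - v u1 u2 p1 p2 * (fb1 u1 u2 p1 p2 * v u1 u2 p1 p2 + fb0 u1 u2 p1 p2).

Lemma abs0 y eps : 0 < eps -> Rabs (y - y) < eps.
Proof. intros; replace (y - y) with 0 by ring; rewrite Rabs_R0; auto. Qed.

Lemma grads1 W v1 v2 x1 x2 x3 x4 a b : HypW W v1 v2 -> W x1 x2 x3 x4 ->
  D1 v1 x1 x2 x3 x4 a -> D1 v2 x1 x2 x3 x4 b ->
  a = lc (v1 x1 x2 x3 x4/(v1 x1 x2 x3 x4 - v2 x1 x2 x3 x4)) (-1/(v1 x1 x2 x3 x4 - v2 x1 x2 x3 x4)) 0 0 (Sgr (fb1 x1 x2 x3 x4) (fb0 x1 x2 x3 x4) (gB1 x1 x2 x3 x4) (gC1 x1 x2 x3 x4) 1 0) (Pgr x1 x2 (fb1 x1 x2 x3 x4) (fb0 x1 x2 x3 x4) (gB1 x1 x2 x3 x4) (gC1 x1 x2 x3 x4) 1 0) (gB1 x1 x2 x3 x4) (gC1 x1 x2 x3 x4) /\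
  b = lc (-v2 x1 x2 x3 x4/(v1 x1 x2 x3 x4 - v2 x1 x2 x3 x4)) (1/(v1 x1 x2 x3 x4 - v2 x1 x2 x3 x4)) 0 0 (Sgr (fb1 x1 x2 x3 x4) (fb0 x1 x2 x3 x4) (gB1 x1 x2 x3 x4) (gC1 x1 x2 x3 x4) 1 0) (Pgr x1 x2 (fb1 x1 x2 x3 x4) (fb0 x1 x2 x3 x4) (gB1 x1 x2 x3 x4) (gC1 x1 x2 x3 x4) 1 0) (gB1 x1 x2 x3 x4) (gC1 x1 x2 x3 x4) /\
  D1 (pvf v1) x1 x2 x3 x4 (lc (-(2*(fb1 x1 x2 x3 x4)*v1 x1 x2 x3 x4 + (fb0 x1 x2 x3 x4))*v1 x1 x2 x3 x4/(v1 x1 x2 x3 x4 - v2 x1 x2 x3 x4)) ((2*(fb1 x1 x2 x3 x4)*v1 x1 x2 x3 x4 + (fb0 x1 x2 x3 x4))/(v1 x1 x2 x3 x4 - v2 x1 x2 x3 x4)) (- v1 x1 x2 x3 x4 ^ 2) (- v1 x1 x2 x3 x4) (Sgr (fb1 x1 x2 x3 x4) (fb0 x1 x2 x3 x4) (gB1 x1 x2 x3 x4) (gC1 x1 x2 x3 x4) 1 0) (Pgr x1 x2 (fb1 x1 x2 x3 x4) (fb0 x1 x2 x3 x4) (gB1 x1 x2 x3 x4) (gC1 x1 x2 x3 x4) 1 0) (gB1 x1 x2 x3 x4) (gC1 x1 x2 x3 x4)) /\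
  D1 (pvf v2) x1 x2 x3 x4 (lc ((2*(fb1 x1 x2 x3 x4)*v2 x1 x2 x3 x4 + (fb0 x1 x2 x3 x4))*v2 x1 x2 x3 x4/(v1 x1 x2 x3 x4 - v2 x1 x2 x3 x4)) (-(2*(fb1 x1 x2 x3 x4)*v2 x1 x2 x3 x4 + (fb0 x1 x2 x3 x4))/(v1 x1 x2 x3 x4 - v2 x1 x2 x3 x4)) (- v2 x1 x2 x3 x4 ^ 2) (- v2 x1 x2 x3 x4) (Sgr (fb1 x1 x2 x3 x4) (fb0 x1 x2 x3 x4) (gB1 x1 x2 x3 x4) (gC1 x1 x2 x3 x4) 1 0) (Pgr x1 x2 (fb1 x1 x2 x3 x4) (fb0 x1 x2 x3 x4) (gB1 x1 x2 x3 x4) (gC1 x1 x2 x3 x4) 1 0) (gB1 x1 x2 x3 x4) (gC1 x1 x2 x3 x4)).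
Proof.
  intros [HO [Hdm Hv]] HW Ha Hb. destruct (HO _ _ _ _ HW) as [eps [He Heps]].
  pose proof (Hdm _ _ _ _ HW) as Hd.
  apply (grad_gen (fun t => v1 t x2 x3 x4) (fun t => v2 t x2 x3 x4) (fun t => Sf t x2 x3 x4) (fun t => Pf t x2 x3 x4)
     (fun t => fb1 t x2 x3 x4) (fun t => fb0 t x2 x3 x4) x1 eps); auto.
  - intros t Ht. apply Hv. apply Heps; try apply abs0; auto.
  - apply Hv; auto.
  - apply D1_S; auto.
  - apply D1_P; auto.
  - apply D1_b1; auto.
  - apply D1_b0; auto.
Qed.

Lemma grads2 W v1 v2 x1 x2 x3 x4 a b : HypW W v1 v2 -> W x1 x2 x3 x4 ->
  D2 v1 x1 x2 x3 x4 a -> D2 v2 x1 x2 x3 x4 b ->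
  a = lc (v1 x1 x2 x3 x4/(v1 x1 x2 x3 x4 - v2 x1 x2 x3 x4)) (-1/(v1 x1 x2 x3 x4 - v2 x1 x2 x3 x4)) 0 0 (Sgr (fb1 x1 x2 x3 x4) (fb0 x1 x2 x3 x4) (gB2 x1 x2 x3 x4) (gC2 x1 x2 x3 x4) 0 1) (Pgr x1 x2 (fb1 x1 x2 x3 x4) (fb0 x1 x2 x3 x4) (gB2 x1 x2 x3 x4) (gC2 x1 x2 x3 x4) 0 1) (gB2 x1 x2 x3 x4) (gC2 x1 x2 x3 x4) /\
  b = lc (-v2 x1 x2 x3 x4/(v1 x1 x2 x3 x4 - v2 x1 x2 x3 x4)) (1/(v1 x1 x2 x3 x4 - v2 x1 x2 x3 x4)) 0 0 (Sgr (fb1 x1 x2 x3 x4) (fb0 x1 x2 x3 x4) (gB2 x1 x2 x3 x4) (gC2 x1 x2 x3 x4) 0 1) (Pgr x1 x2 (fb1 x1 x2 x3 x4) (fb0 x1 x2 x3 x4) (gB2 x1 x2 x3 x4) (gC2 x1 x2 x3 x4) 0 1) (gB2 x1 x2 x3 x4) (gC2 x1 x2 x3 x4) /\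
  D2 (pvf v1) x1 x2 x3 x4 (lc (-(2*(fb1 x1 x2 x3 x4)*v1 x1 x2 x3 x4 + (fb0 x1 x2 x3 x4))*v1 x1 x2 x3 x4/(v1 x1 x2 x3 x4 - v2 x1 x2 x3 x4)) ((2*(fb1 x1 x2 x3 x4)*v1 x1 x2 x3 x4 + (fb0 x1 x2 x3 x4))/(v1 x1 x2 x3 x4 - v2 x1 x2 x3 x4)) (- v1 x1 x2 x3 x4 ^ 2) (- v1 x1 x2 x3 x4) (Sgr (fb1 x1 x2 x3 x4) (fb0 x1 x2 x3 x4) (gB2 x1 x2 x3 x4) (gC2 x1 x2 x3 x4) 0 1) (Pgr x1 x2 (fb1 x1 x2 x3 x4) (fb0 x1 x2 x3 x4) (gB2 x1 x2 x3 x4) (gC2 x1 x2 x3 x4) 0 1) (gB2 x1 x2 x3 x4) (gC2 x1 x2 x3 x4)) /\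
  D2 (pvf v2) x1 x2 x3 x4 (lc ((2*(fb1 x1 x2 x3 x4)*v2 x1 x2 x3 x4 + (fb0 x1 x2 x3 x4))*v2 x1 x2 x3 x4/(v1 x1 x2 x3 x4 - v2 x1 x2 x3 x4)) (-(2*(fb1 x1 x2 x3 x4)*v2 x1 x2 x3 x4 + (fb0 x1 x2 x3 x4))/(v1 x1 x2 x3 x4 - v2 x1 x2 x3 x4)) (- v2 x1 x2 x3 x4 ^ 2) (- v2 x1 x2 x3 x4) (Sgr (fb1 x1 x2 x3 x4) (fb0 x1 x2 x3 x4) (gB2 x1 x2 x3 x4) (gC2 x1 x2 x3 x4) 0 1) (Pgr x1 x2 (fb1 x1 x2 x3 x4) (fb0 x1 x2 x3 x4) (gB2 x1 x2 x3 x4) (gC2 x1 x2 x3 x4) 0 1) (gB2 x1 x2 x3 x4) (gC2 x1 x2 x3 x4)).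
Proof.
  intros [HO [Hdm Hv]] HW Ha Hb. destruct (HO _ _ _ _ HW) as [eps [He Heps]].
  pose proof (Hdm _ _ _ _ HW) as Hd.
  apply (grad_gen (fun t => v1 x1 t x3 x4) (fun t => v2 x1 t x3 x4) (fun t => Sf x1 t x3 x4) (fun t => Pf x1 t x3 x4)
     (fun t => fb1 x1 t x3 x4) (fun t => fb0 x1 t x3 x4) x2 eps); auto.
  - intros t Ht. apply Hv. apply Heps; try apply abs0; auto.
  - apply Hv; auto.
  - apply D2_S; auto.
  - apply D2_P; auto.
  - apply D2_b1; auto.
  - apply D2_b0; auto.
Qed.

Lemma grads3 W v1 v2 x1 x2 x3 x4 a b : HypW W v1 v2 -> W x1 x2 x3 x4 ->
  D3 v1 x1 x2 x3 x4 a -> D3 v2 x1 x2 x3 x4 b ->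
  a = lc (v1 x1 x2 x3 x4/(v1 x1 x2 x3 x4 - v2 x1 x2 x3 x4)) (-1/(v1 x1 x2 x3 x4 - v2 x1 x2 x3 x4)) 0 0 (Sgr (fb1 x1 x2 x3 x4) (fb0 x1 x2 x3 x4) (gB3 x1 x2 x3 x4) (gC3 x1 x2 x3 x4) 0 0) (Pgr x1 x2 (fb1 x1 x2 x3 x4) (fb0 x1 x2 x3 x4) (gB3 x1 x2 x3 x4) (gC3 x1 x2 x3 x4) 0 0) (gB3 x1 x2 x3 x4) (gC3 x1 x2 x3 x4) /\
  b = lc (-v2 x1 x2 x3 x4/(v1 x1 x2 x3 x4 - v2 x1 x2 x3 x4)) (1/(v1 x1 x2 x3 x4 - v2 x1 x2 x3 x4)) 0 0 (Sgr (fb1 x1 x2 x3 x4) (fb0 x1 x2 x3 x4) (gB3 x1 x2 x3 x4) (gC3 x1 x2 x3 x4) 0 0) (Pgr x1 x2 (fb1 x1 x2 x3 x4) (fb0 x1 x2 x3 x4) (gB3 x1 x2 x3 x4) (gC3 x1 x2 x3 x4) 0 0) (gB3 x1 x2 x3 x4) (gC3 x1 x2 x3 x4) /\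
  D3 (pvf v1) x1 x2 x3 x4 (lc (-(2*(fb1 x1 x2 x3 x4)*v1 x1 x2 x3 x4 + (fb0 x1 x2 x3 x4))*v1 x1 x2 x3 x4/(v1 x1 x2 x3 x4 - v2 x1 x2 x3 x4)) ((2*(fb1 x1 x2 x3 x4)*v1 x1 x2 x3 x4 + (fb0 x1 x2 x3 x4))/(v1 x1 x2 x3 x4 - v2 x1 x2 x3 x4)) (- v1 x1 x2 x3 x4 ^ 2) (- v1 x1 x2 x3 x4) (Sgr (fb1 x1 x2 x3 x4) (fb0 x1 x2 x3 x4) (gB3 x1 x2 x3 x4) (gC3 x1 x2 x3 x4) 0 0) (Pgr x1 x2 (fb1 x1 x2 x3 x4) (fb0 x1 x2 x3 x4) (gB3 x1 x2 x3 x4) (gC3 x1 x2 x3 x4) 0 0) (gB3 x1 x2 x3 x4) (gC3 x1 x2 x3 x4)) /\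
  D3 (pvf v2) x1 x2 x3 x4 (lc ((2*(fb1 x1 x2 x3 x4)*v2 x1 x2 x3 x4 + (fb0 x1 x2 x3 x4))*v2 x1 x2 x3 x4/(v1 x1 x2 x3 x4 - v2 x1 x2 x3 x4)) (-(2*(fb1 x1 x2 x3 x4)*v2 x1 x2 x3 x4 + (fb0 x1 x2 x3 x4))/(v1 x1 x2 x3 x4 - v2 x1 x2 x3 x4)) (- v2 x1 x2 x3 x4 ^ 2) (- v2 x1 x2 x3 x4) (Sgr (fb1 x1 x2 x3 x4) (fb0 x1 x2 x3 x4) (gB3 x1 x2 x3 x4) (gC3 x1 x2 x3 x4) 0 0) (Pgr x1 x2 (fb1 x1 x2 x3 x4) (fb0 x1 x2 x3 x4) (gB3 x1 x2 x3 x4) (gC3 x1 x2 x3 x4) 0 0) (gB3 x1 x2 x3 x4) (gC3 x1 x2 x3 x4)).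
Proof.
  intros [HO [Hdm Hv]] HW Ha Hb. destruct (HO _ _ _ _ HW) as [eps [He Heps]].
  pose proof (Hdm _ _ _ _ HW) as Hd.
  apply (grad_gen (fun t => v1 x1 x2 t x4) (fun t => v2 x1 x2 t x4) (fun t => Sf x1 x2 t x4) (fun t => Pf x1 x2 t x4)
     (fun t => fb1 x1 x2 t x4) (fun t => fb0 x1 x2 t x4) x3 eps); auto.
  - intros t Ht. apply Hv. apply Heps; try apply abs0; auto.
  - apply Hv; auto.
  - apply D3_S; auto.
  - apply D3_P; auto.
  - apply D3_b1; auto.
  - apply D3_b0; auto.
Qed.

Lemma grads4 W v1 v2 x1 x2 x3 x4 a b : HypW W v1 v2 -> W x1 x2 x3 x4 ->
  D4 v1 x1 x2 x3 x4 a -> D4 v2 x1 x2 x3 x4 b ->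
  a = lc (v1 x1 x2 x3 x4/(v1 x1 x2 x3 x4 - v2 x1 x2 x3 x4)) (-1/(v1 x1 x2 x3 x4 - v2 x1 x2 x3 x4)) 0 0 (Sgr (fb1 x1 x2 x3 x4) (fb0 x1 x2 x3 x4) (gB4 x1 x2 x3 x4) (gC4 x1 x2 x3 x4) 0 0) (Pgr x1 x2 (fb1 x1 x2 x3 x4) (fb0 x1 x2 x3 x4) (gB4 x1 x2 x3 x4) (gC4 x1 x2 x3 x4) 0 0) (gB4 x1 x2 x3 x4) (gC4 x1 x2 x3 x4) /\
  b = lc (-v2 x1 x2 x3 x4/(v1 x1 x2 x3 x4 - v2 x1 x2 x3 x4)) (1/(v1 x1 x2 x3 x4 - v2 x1 x2 x3 x4)) 0 0 (Sgr (fb1 x1 x2 x3 x4) (fb0 x1 x2 x3 x4) (gB4 x1 x2 x3 x4) (gC4 x1 x2 x3 x4) 0 0) (Pgr x1 x2 (fb1 x1 x2 x3 x4) (fb0 x1 x2 x3 x4) (gB4 x1 x2 x3 x4) (gC4 x1 x2 x3 x4) 0 0) (gB4 x1 x2 x3 x4) (gC4 x1 x2 x3 x4) /\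
  D4 (pvf v1) x1 x2 x3 x4 (lc (-(2*(fb1 x1 x2 x3 x4)*v1 x1 x2 x3 x4 + (fb0 x1 x2 x3 x4))*v1 x1 x2 x3 x4/(v1 x1 x2 x3 x4 - v2 x1 x2 x3 x4)) ((2*(fb1 x1 x2 x3 x4)*v1 x1 x2 x3 x4 + (fb0 x1 x2 x3 x4))/(v1 x1 x2 x3 x4 - v2 x1 x2 x3 x4)) (- v1 x1 x2 x3 x4 ^ 2) (- v1 x1 x2 x3 x4) (Sgr (fb1 x1 x2 x3 x4) (fb0 x1 x2 x3 x4) (gB4 x1 x2 x3 x4) (gC4 x1 x2 x3 x4) 0 0) (Pgr x1 x2 (fb1 x1 x2 x3 x4) (fb0 x1 x2 x3 x4) (gB4 x1 x2 x3 x4) (gC4 x1 x2 x3 x4) 0 0) (gB4 x1 x2 x3 x4) (gC4 x1 x2 x3 x4)) /\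
  D4 (pvf v2) x1 x2 x3 x4 (lc ((2*(fb1 x1 x2 x3 x4)*v2 x1 x2 x3 x4 + (fb0 x1 x2 x3 x4))*v2 x1 x2 x3 x4/(v1 x1 x2 x3 x4 - v2 x1 x2 x3 x4)) (-(2*(fb1 x1 x2 x3 x4)*v2 x1 x2 x3 x4 + (fb0 x1 x2 x3 x4))/(v1 x1 x2 x3 x4 - v2 x1 x2 x3 x4)) (- v2 x1 x2 x3 x4 ^ 2) (- v2 x1 x2 x3 x4) (Sgr (fb1 x1 x2 x3 x4) (fb0 x1 x2 x3 x4) (gB4 x1 x2 x3 x4) (gC4 x1 x2 x3 x4) 0 0) (Pgr x1 x2 (fb1 x1 x2 x3 x4) (fb0 x1 x2 x3 x4) (gB4 x1 x2 x3 x4) (gC4 x1 x2 x3 x4) 0 0) (gB4 x1 x2 x3 x4) (gC4 x1 x2 x3 x4)).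
Proof.
  intros [HO [Hdm Hv]] HW Ha Hb. destruct (HO _ _ _ _ HW) as [eps [He Heps]].
  pose proof (Hdm _ _ _ _ HW) as Hd.
  apply (grad_gen (fun t => v1 x1 x2 x3 t) (fun t => v2 x1 x2 x3 t) (fun t => Sf x1 x2 x3 t) (fun t => Pf x1 x2 x3 t)
     (fun t => fb1 x1 x2 x3 t) (fun t => fb0 x1 x2 x3 t) x4 eps); auto.
  - intros t Ht. apply Hv. apply Heps; try apply abs0; auto.
  - apply Hv; auto.
  - apply D4_S; auto.
  - apply D4_P; auto.
  - apply D4_b1; auto.
  - apply D4_b0; auto.
Qed.

Ltac prep HH Hpart :=
 let x1 := fresh "x1" in let x2 := fresh "x2" in let x3 := fresh "x3" in let x4 := fresh "x4" in
 intros x1 x2 x3 x4 HW;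
 let HH' := fresh in pose proof HH as HH'; destruct HH' as [HO [Hdm Hv]];
 pose proof (Hdm _ _ _ _ HW) as Hd; destruct (Hv _ _ _ _ HW) as [Hne [HS HP]];
 destruct (Hpart _ _ _ _ HW) as [[[a1 Ha1] [[a2 Ha2] [[a3 Ha3] [a4 Ha4]]]] [[b1 Hb1] [[b2 Hb2] [[b3 Hb3] [b4 Hb4]]]]];
 destruct (grads1 _ _ _ _ _ _ _ _ _ HH HW Ha1 Hb1) as [Ea1 [Eb1 [Hp1 Hq1]]];
 destruct (grads2 _ _ _ _ _ _ _ _ _ HH HW Ha2 Hb2) as [Ea2 [Eb2 [Hp2 Hq2]]];
 destruct (grads3 _ _ _ _ _ _ _ _ _ HH HW Ha3 Hb3) as [Ea3 [Eb3 [Hp3 Hq3]]];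
 destruct (grads4 _ _ _ _ _ _ _ _ _ HH HW Ha4 Hb4) as [Ea4 [Eb4 [Hp4 Hq4]]];
 split; [repeat split; eexists; eassumption | split; [repeat split; eexists; eassumption | ]];
 intros f1 f2 f3 f4 g1 g2 g3 g4 F1 F2 F3 F4 G1 G2 G3 G4;
 match goal with |- ?v = _ => change (v = br x1 x2 f1 f2 f3 f4 g1 g2 g3 g4) end.

Ltac fin x1 x2 x3 x4 Hd HS Hne :=
  rewrite br_comb;
  rewrite (br_sq x1 x2 x3 x4 Hd), (br_sB x1 x2 x3 x4 Hd), (br_sC x1 x2 x3 x4 Hd),
    (br_qB x1 x2 x3 x4 Hd), (br_qC x1 x2 x3 x4 Hd), (br_BC x1 x2 x3 x4 Hd);
  unfold czero; rewrite <- HS; field; lra.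

Lemma PB_all W v1 v2 : HypW W v1 v2 ->
  (forall u1 u2 p1 p2, W u1 u2 p1 p2 ->
        has_partials v1 u1 u2 p1 p2 /\ has_partials v2 u1 u2 p1 p2) ->
  PB_eq v1 v2 czero W /\ PB_eq (pvf v1) (pvf v2) czero W /\ PB_eq v1 (pvf v1) v1 W /\
  PB_eq v2 (pvf v2) v2 W /\ PB_eq v1 (pvf v2) czero W /\ PB_eq v2 (pvf v1) czero W.
Proof.
  intros HH Hpart. split; [|split; [|split; [|split; [|split]]]].
  - prep HH Hpart. rewrite (uniqueness_limite _ _ _ _ F1 Ha1), Ea1. rewrite (uniqueness_limite _ _ _ _ F2 Ha2), Ea2. rewrite (uniqueness_limite _ _ _ _ F3 Ha3), Ea3. rewrite (uniqueness_limite _ _ _ _ F4 Ha4), Ea4. rewrite (uniqueness_limite _ _ _ _ G1 Hb1), Eb1. rewrite (uniqueness_limite _ _ _ _ G2 Hb2), Eb2. rewrite (uniqueness_limite _ _ _ _ G3 Hb3), Eb3. rewrite (uniqueness_limite _ _ _ _ G4 Hb4), Eb4. fin x1 x2 x3 x4 Hd HS Hne.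
  - prep HH Hpart. rewrite (uniqueness_limite _ _ _ _ F1 Hp1). rewrite (uniqueness_limite _ _ _ _ F2 Hp2). rewrite (uniqueness_limite _ _ _ _ F3 Hp3). rewrite (uniqueness_limite _ _ _ _ F4 Hp4). rewrite (uniqueness_limite _ _ _ _ G1 Hq1). rewrite (uniqueness_limite _ _ _ _ G2 Hq2). rewrite (uniqueness_limite _ _ _ _ G3 Hq3). rewrite (uniqueness_limite _ _ _ _ G4 Hq4). fin x1 x2 x3 x4 Hd HS Hne.
  - prep HH Hpart. rewrite (uniqueness_limite _ _ _ _ F1 Ha1), Ea1. rewrite (uniqueness_limite _ _ _ _ F2 Ha2), Ea2. rewrite (uniqueness_limite _ _ _ _ F3 Ha3), Ea3. rewrite (uniqueness_limite _ _ _ _ F4 Ha4), Ea4. rewrite (uniqueness_limite _ _ _ _ G1 Hp1). rewrite (uniqueness_limite _ _ _ _ G2 Hp2). rewrite (uniqueness_limite _ _ _ _ G3 Hp3). rewrite (uniqueness_limite _ _ _ _ G4 Hp4). fin x1 x2 x3 x4 Hd HS Hne.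
  - prep HH Hpart. rewrite (uniqueness_limite _ _ _ _ F1 Hb1), Eb1. rewrite (uniqueness_limite _ _ _ _ F2 Hb2), Eb2. rewrite (uniqueness_limite _ _ _ _ F3 Hb3), Eb3. rewrite (uniqueness_limite _ _ _ _ F4 Hb4), Eb4. rewrite (uniqueness_limite _ _ _ _ G1 Hq1). rewrite (uniqueness_limite _ _ _ _ G2 Hq2). rewrite (uniqueness_limite _ _ _ _ G3 Hq3). rewrite (uniqueness_limite _ _ _ _ G4 Hq4). fin x1 x2 x3 x4 Hd HS Hne.
  - prep HH Hpart. rewrite (uniqueness_limite _ _ _ _ F1 Ha1), Ea1. rewrite (uniqueness_limite _ _ _ _ F2 Ha2), Ea2. rewrite (uniqueness_limite _ _ _ _ F3 Ha3), Ea3. rewrite (uniqueness_limite _ _ _ _ F4 Ha4), Ea4. rewrite (uniqueness_limite _ _ _ _ G1 Hq1). rewrite (uniqueness_limite _ _ _ _ G2 Hq2). rewrite (uniqueness_limite _ _ _ _ G3 Hq3). rewrite (uniqueness_limite _ _ _ _ G4 Hq4). fin x1 x2 x3 x4 Hd HS Hne.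
  - prep HH Hpart. rewrite (uniqueness_limite _ _ _ _ F1 Hb1), Eb1. rewrite (uniqueness_limite _ _ _ _ F2 Hb2), Eb2. rewrite (uniqueness_limite _ _ _ _ F3 Hb3), Eb3. rewrite (uniqueness_limite _ _ _ _ F4 Hb4), Eb4. rewrite (uniqueness_limite _ _ _ _ G1 Hp1). rewrite (uniqueness_limite _ _ _ _ G2 Hp2). rewrite (uniqueness_limite _ _ _ _ G3 Hp3). rewrite (uniqueness_limite _ _ _ _ G4 Hp4). fin x1 x2 x3 x4 Hd HS Hne.
Qed.

Theorem proposition4 :
  (* divisibility of the quartic by (x - u1)(x - u2) on the domain *)
  (forall u1 u2 p1 p2, dom u1 u2 p1 p2 ->
     exists c2 c1 c0, forall x,
       quartic u1 u2 p1 p2 x = (x - u1) * (x - u2) * (c2 * x ^ 2 + c1 * x + c0)) /\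
  (* the map rho on an open set W where v1, v2 are distinct real roots of the
     quadratic quotient, chosen as (continuous, partially differentiable) functions *)
  (forall (W : Set4) (v1 v2 : F4),
     open4 W ->
     (forall u1 u2 p1 p2, W u1 u2 p1 p2 -> dom u1 u2 p1 p2) ->
     (forall u1 u2 p1 p2, W u1 u2 p1 p2 ->
        v1 u1 u2 p1 p2 <> v2 u1 u2 p1 p2 /\
        forall x, quartic u1 u2 p1 p2 x =
          (x - u1) * (x - u2) *
          (- (fb1 u1 u2 p1 p2) ^ 2 * (x - v1 u1 u2 p1 p2) * (x - v2 u1 u2 p1 p2))) ->
     continuous_on4 v1 W -> continuous_on4 v2 W ->
     (forall u1 u2 p1 p2, W u1 u2 p1 p2 ->
        has_partials v1 u1 u2 p1 p2 /\ has_partials v2 u1 u2 p1 p2) ->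
     let pv1 : F4 := fun u1 u2 p1 p2 =>
       - v1 u1 u2 p1 p2 * (fb1 u1 u2 p1 p2 * v1 u1 u2 p1 p2 + fb0 u1 u2 p1 p2) in
     let pv2 : F4 := fun u1 u2 p1 p2 =>
       - v2 u1 u2 p1 p2 * (fb1 u1 u2 p1 p2 * v2 u1 u2 p1 p2 + fb0 u1 u2 p1 p2) in
     (* (i) rho preserves a and b *)
     (forall u1 u2 p1 p2, W u1 u2 p1 p2 ->
        fa (v1 u1 u2 p1 p2) (v2 u1 u2 p1 p2) (pv1 u1 u2 p1 p2) (pv2 u1 u2 p1 p2)
          = fa u1 u2 p1 p2 /\
        fb (v1 u1 u2 p1 p2) (v2 u1 u2 p1 p2) (pv1 u1 u2 p1 p2) (pv2 u1 u2 p1 p2)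
          = fb u1 u2 p1 p2) /\
     (* (ii) rho preserves the Poisson bracket *)
     PB_eq v1 v2 czero W /\
     PB_eq pv1 pv2 czero W /\
     PB_eq v1 pv1 v1 W /\
     PB_eq v2 pv2 v2 W /\
     PB_eq v1 pv2 czero W /\
     PB_eq v2 pv1 czero W).

Proof.
  split.
  { intros u1 u2 p1 p2 Hd. apply divis; auto. }
  intros W v1 v2 HO Hdm Hroots Hc1 Hc2 Hpart pv1 pv2.
  assert (HH : HypW W v1 v2).
  { split; [auto | split; [auto |]]. intros u1 u2 p1 p2 HW.
    destruct (Hroots _ _ _ _ HW) as [Hne Hq]. split; auto.
    apply vieta; auto. }
  split.
  { intros u1 u2 p1 p2 HW. destruct (Hroots _ _ _ _ HW) as [Hne Hq].
    apply preserve; auto.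
    - assert (E : quartic u1 u2 p1 p2 (v1 u1 u2 p1 p2) = 0) by (rewrite Hq; ring).
      unfold quartic in E. unfold pv1. lra.
    - assert (E : quartic u1 u2 p1 p2 (v2 u1 u2 p1 p2) = 0) by (rewrite Hq; ring).
      unfold quartic in E. unfold pv2. lra. }
  exact (PB_all W v1 v2 HH Hpart).
Qed.
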